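(* Let $\mathbf A$ be an algebra with a Mal'cev term $q$. Then there exists a largest clone $\mathcal C$ on $A$ containing $q$ such that the algebra $(A,\mathcal C)$ has the same congruence lattice as $\mathbf A$ and, for every $n\ge1$ and all congruences $\alpha_0,\dots,\alpha_{n-1}$, the commutator $[\alpha_0,\dots,\alpha_{n-1}]$ computed in $(A,\mathcal C)$ equals the one computed in $\mathbf A$.
   Context: A Mal'cev term of $\mathbf A$ is a ternary term operation $q$ with $q(x,x,y)=y=q(y,x,x)$. For a clone $\mathcal C$ on $A$, $(A,\mathcal C)$ denotes the algebra whose operations are those of $\mathcal C$. Higher commutator (Bulatov): for congruences $\alpha_0,\dots,\alpha_{n-1},\gamma$ of an algebra, say $\alpha_0,\dots,\alpha_{n-2}$ centralize $\alpha_{n-1}$ modulo $\gamma$ if for all tuples $\mathbf a_i,\mathbf b_i$ ($i<n$, with $\mathbf a_i\neq\mathbf b_i$ congruent modulo $\alpha_i$ coordinatewise) and every term operation $t$ such that $t(\mathbf x_0,\dots,\mathbf x_{n-2},\mathbf a_{n-1})\equiv_\gamma t(\mathbf x_0,\dots,\mathbf x_{n-2},\mathbf b_{n-1})$ for all $(\mathbf x_0,\dots,\mathbf x_{n-2})\in(\{\mathbf a_0,\mathbf b_0\}\times\dots\times\{\mathbf a_{n-2},\mathbf b_{n-2}\})\setminus\{(\mathbf b_0,\dots,\mathbf b_{n-2})\}$, we have $t(\mathbf b_0,\dots,\mathbf b_{n-2},\mathbf a_{n-1})\equiv_\gamma t(\mathbf b_0,\dots,\mathbf b_{n-2},\mathbf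 b_{n-1})$. The commutator $[\alpha_0,\dots,\alpha_{n-1}]$ is the smallest congruence $\gamma$ such that $\alpha_0,\dots,\alpha_{n-2}$ centralize $\alpha_{n-1}$ modulo $\gamma$. *)

(* Defs.v *)
From mathcomp Require Import all_boot.
Set Implicit Arguments. Unset Strict Implicit. Unset Printing Implicit Defensive.

Definition op (A : Type) (n : nat) := ('I_n -> A) -> A.

Definition opset (A : Type) := forall n : nat, op A n -> Prop.

Definition proj (A : Type) (n : nat) (i : 'I_n) : op A n := fun x => x i.

Definition comp (A : Type) (n m : nat) (f : op A n) (g : 'I_n -> op A m) : op A m :=
  fun x => f (fun i => g i x).

Definition is_clone (A : Type) (C : opset A) : Prop :=
  (forall n (i : 'I_n), C n (@proj A n i)) /\
  (forall n m (f : op A n) (g : 'I_n -> op A m),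
      C n f -> (forall i, C m (g i)) -> C m (comp f g)).

(* clone of term operations of the algebra (A, F): the clone generated by F *)
Definition Clo (A : Type) (F : opset A) : opset A :=
  fun n f => forall C : opset A, is_clone C ->
    (forall k g, F k g -> C k g) -> C n f.

Definition subops (A : Type) (C D : opset A) : Prop :=
  forall n f, C n f -> D n f.

Definition rel (A : Type) := A -> A -> Prop.

Definition Con (A : Type) (F : opset A) (th : rel A) : Prop :=
  (forall x, th x x) /\ (forall x y, th x y -> th y x) /\
  (forall x y z, th x y -> th y z -> th x z) /\
  (forall n (f : op A n), F n f ->
     forall x y : 'I_n -> A, (forall i, th (x i) (y i)) -> th (f x) (f y)).

(* Tuples a_0,...,a_n (resp. b_...) are encoded as two m-tuples a, b together
   with a block assignment blk : 'I_m -> 'I_n.+1 telling which tuple each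
   argument position of the term operation t belongs to.
   For x : 'I_n -> bool (x i = true means "use b_i") and c : bool (choice for
   the last block), [pick] gives the argument tuple of t. *)
Definition pick (A : Type) (n m : nat) (blk : 'I_m -> 'I_n.+1) (a b : 'I_m -> A)
  (x : 'I_n -> bool) (c : bool) : 'I_m -> A :=
  fun j => if match unlift ord_max (blk j) with Some i => x i | None => c end
           then b j else a j.

(* alpha_0,...,alpha_{n-1} centralize alpha_n modulo gamma, in (A, F)
   (term condition quantifies over term operations, i.e. Clo F). *)
Definition centralizes (A : Type) (F : opset A) (n : nat)
  (alpha : 'I_n.+1 -> rel A) (gamma : rel A) : Prop :=
  forall m (blk : 'I_m -> 'I_n.+1) (a b : 'I_m -> A) (t : op A m),
    Clo F t ->
    (forall j, alpha (blk j) (a j) (b j)) ->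
    (forall i : 'I_n.+1, exists j, blk j = i /\ a j <> b j) ->
    (forall x : 'I_n -> bool, (exists i, x i = false) ->
       gamma (t (pick blk a b x false)) (t (pick blk a b x true))) ->
    gamma (t (pick blk a b (fun _ => true) false))
          (t (pick blk a b (fun _ => true) true)).

Definition is_commutator (A : Type) (F : opset A) (n : nat)
  (alpha : 'I_n.+1 -> rel A) (gamma : rel A) : Prop :=
  Con F gamma /\ centralizes F alpha gamma /\
  (forall delta, Con F delta -> centralizes F alpha delta ->
     forall x y, gamma x y -> delta x y).

Definition tri (A : Type) (x y z : A) : 'I_3 -> A :=
  fun i => match val i with 0 => x | 1 => y | _ => z end.

Definition is_malcev (A : Type) (q : op A 3) : Prop :=
  forall x y, q (tri x x y) = y /\ q (tri y x x) = y.

Definition preserves_cons_comms (A : Type) (F C : opset A) : Prop :=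
  (forall th : rel A, Con F th <-> Con C th) /\
  (forall n (alpha : 'I_n.+1 -> rel A), (forall i, Con F (alpha i)) ->
     forall gamma : rel A,
       is_commutator F alpha gamma <-> is_commutator C alpha gamma).

(* Main.v *)
Require Import Defs.
From mathcomp Require Import all_boot.
From Stdlib Require Import FunctionalExtensionality Classical IndefiniteDescription.
Set Implicit Arguments. Unset Strict Implicit. Unset Printing Implicit Defensive.
Local Notation rel := Defs.rel.



Section Basics.
Variable A : Type.
Implicit Types F D : opset A.

Lemma clo_clone F : is_clone (Clo F).
Proof.
split.
- move=> n i C [hp hc] _; exact: hp.
- move=> n m f g hf hg C hC hF; have [_ hc] := hC.
  apply: hc; first exact: hf. by move=> i; apply: hg.
Qed.

Lemma clo_incl F n f : F n f -> Clo F f.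
Proof. by move=> hf C _ hF; apply: hF. Qed.

Lemma clone_clo D n f : is_clone D -> Clo D f -> D n f.
Proof. by move=> hD hf; apply: hf. Qed.

Definition preserves n (f : op A n) (th : rel A) :=
  forall x y : 'I_n -> A, (forall i, th (x i) (y i)) -> th (f x) (f y).

Lemma clo_pres F th n (f : op A n) : Con F th -> Clo F f -> preserves f th.
Proof.
move=> [_ [_ [_ hc]]] hf; apply: (hf (fun n f => preserves f th)).
- split.
  + by move=> ? ? ? ? hh; apply: hh.
  + move=> ? ? ? ? hg hh x y hxy; apply: hg => i; apply: hh; exact: hxy.
- move=> ? ? hg0 x y hxy; exact: hc hg0 x y hxy.
Qed.

Lemma con_clo F th : Con F th <-> Con (Clo F) th.
Proof.
split.
- move=> h; have [r [s [t _]]] := h; do 3 (split => //).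
  move=> n f hf; exact: clo_pres h hf.
- move=> [r [s [t hc]]]; do 3 (split => //).
  move=> n f hf; apply: hc; exact: clo_incl.
Qed.

Lemma cent_clo F n (al : 'I_n.+1 -> rel A) g :
  centralizes F al g <-> centralizes (Clo F) al g.
Proof.
split.
- move=> h m blk a b t ht; apply: (h m blk a b t); exact: (clone_clo (clo_clone F) ht).
- move=> h m blk a b t ht; apply: (h m blk a b t); exact: clo_incl.
Qed.

Lemma comm_clo F n (al : 'I_n.+1 -> rel A) g :
  is_commutator F al g <-> is_commutator (Clo F) al g.
Proof.
split.
- move=> [h1 [h2 h3]]; split; first exact: (proj1 (con_clo F g)).
  split; first exact: (proj1 (cent_clo F al g)).
  move=> d hd hc; apply: h3; [exact: (proj2 (con_clo F d)) | exact: (proj2 (cent_clo F al d))].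
- move=> [h1 [h2 h3]]; split; first exact: (proj2 (con_clo F g)).
  split; first exact: (proj2 (cent_clo F al g)).
  move=> d hd hc; apply: h3; [exact: (proj1 (con_clo F d)) | exact: (proj1 (cent_clo F al d))].
Qed.

End Basics.


Definition cube (A : Type) N := ('I_N -> bool) -> A.

Inductive Mc (A : Type) (D : opset A) N (al : 'I_N -> rel A) : cube A N -> Prop :=
| Mconst u : Mc D al (fun _ => u)
| Melem i u v : al i u v -> Mc D al (fun X => if X i then v else u)
| Mop k (f : op A k) (V : 'I_k -> cube A N) :
    D k f -> (forall j, Mc D al (V j)) -> Mc D al (fun X => f (fun j => V j X)).

Definition setn N (X : 'I_N -> bool) (k : nat) (e : bool) : 'I_N -> bool :=
  fun i => if val i == k then e else X i.
Definition flipto N (p X : 'I_N -> bool) : 'I_N -> bool := fun k => X k == p k.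
Definition insX N (i : 'I_N.+1) (e : bool) (Y : 'I_N -> bool) : 'I_N.+1 -> bool :=
  fun k => match unlift i k with Some k' => Y k' | None => e end.

Section Cubes.
Variable A : Type.
Variable D : opset A.

Lemma Mext N (al : 'I_N -> rel A) c c' : Mc D al c -> (forall X, c X = c' X) -> Mc D al c'.
Proof. by move=> h e; have <- : c = c' by apply: functional_extensionality. Qed.

Lemma Mset N (al : 'I_N -> rel A) c k e :
  Mc D al c -> Mc D al (fun X => c (setn X k e)).
Proof.
elim => [u|i u v h|k0 f V hf hV IH].
- exact: Mconst.
- case E: (val i == k).
  + have -> : (fun X => if setn X k e i then v else u) = fun _ => if e then v else u.
      by apply: functional_extensionality => X; rewrite /setn E.
    exact: Mconst.
  + have -> : (fun X => if setn X k e i then v else u) = fun X => if X i then v else u.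
      by apply: functional_extensionality => X; rewrite /setn E.
    exact: Melem.
- exact: (Mop (V := fun j X => V j (setn X k e))).
Qed.

Lemma Mflip N (al : 'I_N -> rel A) c p :
  (forall i x y, al i x y -> al i y x) ->
  Mc D al c -> Mc D al (fun X => c (flipto p X)).
Proof.
move=> hs; elim => [u|i u v h|k0 f V hf hV IH].
- exact: Mconst.
- case E: (p i).
  + have -> : (fun X => if flipto p X i then v else u) = fun X => if X i then v else u.
      by apply: functional_extensionality => X; rewrite /flipto E; case: (X i).
    exact: Melem.
  + have -> : (fun X => if flipto p X i then v else u) = fun X => if X i then u else v.
      by apply: functional_extensionality => X; rewrite /flipto E; case: (X i).
    apply: Melem; exact: hs.
- exact: (Mop (V := fun j X => V j (flipto p X))).
Qed.

Lemma Mface N (al : 'I_N.+1 -> rel A) c (i : 'I_N.+1) e :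
  Mc D al c -> Mc D (fun k => al (lift i k)) (fun Y => c (insX i e Y)).
Proof.
elim => [u|k u v h|k0 f V hf hV IH].
- exact: Mconst.
- case: (unliftP i k) => [k'|] hk; subst k.
  + have h' : Mc D (fun k => al (lift i k)) (fun X => if X k' then v else u) by exact: Melem.
    apply: (Mext h') => Y.
    by rewrite /insX liftK.
  + have h' : Mc D (fun k => al (lift i k)) (fun _ => if e then v else u) by exact: Mconst.
    apply: (Mext h') => Y.
    by rewrite /insX unlift_none.
- exact: (Mop (V := fun j Y => V j (insX i e Y))).
Qed.

Lemma Mlift N (al : 'I_N.+1 -> rel A) d (i : 'I_N.+1) :
  Mc D (fun k => al (lift i k)) d -> Mc D al (fun X => d (fun k => X (lift i k))).
Proof.
elim => [u|k u v h|k0 f V hf hV IH].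
- exact: Mconst.
- have h' : Mc D al (fun X => if X (lift i k) then v else u) by exact: Melem.
  exact: h'.
- exact: (Mop (V := fun j X => V j (fun k => X (lift i k)))).
Qed.

Lemma insX_setn N (i : 'I_N.+1) (X : 'I_N.+1 -> bool) :
  insX i false (fun k => X (lift i k)) = setn X i false.
Proof.
apply: functional_extensionality => k; rewrite /insX /setn.
case: unliftP => [k'|] ->.
- have : val (lift i k') != val i by rewrite eq_sym (neq_lift i k').
  by move/negbTE => ->.
- by rewrite eqxx.
Qed.

Lemma Mq (q : op A 3) N (al : 'I_N -> rel A) V1 V2 V3 :
  @D 3 q -> Mc D al V1 -> Mc D al V2 -> Mc D al V3 ->
  Mc D al (fun X => q (tri (V1 X) (V2 X) (V3 X))).
Proof.
move=> hq h1 h2 h3.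
have -> : (fun X => q (tri (V1 X) (V2 X) (V3 X))) = fun X => q (fun j => tri V1 V2 V3 j X).
  apply: functional_extensionality => X; congr q.
  by apply: functional_extensionality => -[[|[|[|j]]] hj].
apply: Mop => // -[[|[|[|j]]] hj] //=.
Qed.

End Cubes.


Definition pickX (A : Type) m N (blk : 'I_m -> 'I_N) (a b : 'I_m -> A) (X : 'I_N -> bool) : 'I_m -> A :=
  fun j => if X (blk j) then b j else a j.

Definition Mterm (A : Type) (D : opset A) N (al : 'I_N -> rel A) (c : cube A N) :=
  exists m (blk : 'I_m -> 'I_N) (a b : 'I_m -> A) (t : op A m),
    D m t /\ (forall j, al (blk j) (a j) (b j)) /\ forall X, c X = t (pickX blk a b X).

Lemma I0F (j : 'I_0) : False. Proof. by case: j. Qed.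

Section Term.
Variable A : Type.
Variable D : opset A.
Hypothesis hD : is_clone D.

Lemma simrep N (al : 'I_N -> rel A) k (V : 'I_k -> cube A N) :
  (forall j, Mterm D al (V j)) ->
  exists m (blk : 'I_m -> 'I_N) (a b : 'I_m -> A) (g : 'I_k -> op A m),
    (forall j, @D m (g j)) /\ (forall j, al (blk j) (a j) (b j)) /\
    forall j X, V j X = g j (pickX blk a b X).
Proof.
elim: k V => [|k IH] V hV.
- exists 0, (fun j => False_rect _ (I0F j)), (fun j => False_rect _ (I0F j)),
    (fun j => False_rect _ (I0F j)), (fun j => False_rect _ (I0F j)).
  by split; [case|split; case].
- have [m1 [blk1 [a1 [b1 [g1 [hg1 [ha1 he1]]]]]]] := IH (fun j => V (lift ord0 j)) (fun j => hV _).
  have [m2 [blk2 [a2 [b2 [t2 [ht2 [ha2 he2]]]]]]] := hV ord0.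
  have [hpr hcp] := hD.
  exists (m1 + m2), (fun j => match split j with inl j1 => blk1 j1 | inr j2 => blk2 j2 end),
    (fun j => match split j with inl j1 => a1 j1 | inr j2 => a2 j2 end),
    (fun j => match split j with inl j1 => b1 j1 | inr j2 => b2 j2 end),
    (fun j => match unlift ord0 j with
              | Some j' => Defs.comp (g1 j') (fun i => @proj A _ (lshift m2 i))
              | None => Defs.comp t2 (fun i => @proj A _ (rshift m1 i)) end).
  split; [|split].
  + move=> j; case: (unlift ord0 j) => [j'|]; apply: hcp => // i; exact: hpr.
  + by move=> j; case: (split j).
  + move=> j X; case: (unliftP ord0 j) => [j'|] ->.
    * rewrite he1 /Defs.comp /proj; congr (g1 j'); apply: functional_extensionality => i.
      rewrite /pickX.
      have -> : split (lshift m2 i) = inl i by exact: (unsplitK (inl _ i)).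
      by [].
    * rewrite he2 /Defs.comp /proj; congr t2; apply: functional_extensionality => i.
      rewrite /pickX.
      have -> : split (rshift m1 i) = inr i by exact: (unsplitK (inr _ i)).
      by [].
Qed.

Lemma M_Mterm n (al : 'I_n.+1 -> rel A) c :
  (forall i x, al i x x) -> Mc D al c -> Mterm D al c.
Proof.
move=> hr; have [hpr hcp] := hD.
elim => [u|i u v h|k f V hf hV IH].
- exists 1, (fun _ => ord0), (fun _ => u), (fun _ => u), (@proj A 1 ord0).
  split; first exact: hpr. split => // X; rewrite /proj /pickX; by case: (X ord0).
- exists 1, (fun _ => i), (fun _ => u), (fun _ => v), (@proj A 1 ord0).
  split; first exact: hpr. by split.
- have [m [blk [a [b [g [hg [ha he]]]]]]] := simrep IH.
  exists m, blk, a, b, (Defs.comp f g); split; first exact: hcp.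
  split => // X; rewrite /Defs.comp; congr f; apply: functional_extensionality => j; exact: he.
Qed.

Definition Jx n (x : 'I_n -> bool) (e : bool) : 'I_n.+1 -> bool :=
  fun k => match unlift ord_max k with Some i => x i | None => e end.

Definition Ptc n (g : rel A) (c : cube A n.+1) :=
  (forall x : 'I_n -> bool, (exists i, x i = false) -> g (c (Jx x false)) (c (Jx x true))) ->
  g (c (Jx (fun _ => true) false)) (c (Jx (fun _ => true) true)).

Lemma TCM n (al : 'I_n.+1 -> rel A) g c :
  centralizes D al g -> (forall x, g x x) -> (forall i x, al i x x) ->
  Mc D al c -> Ptc g c.
Proof.
move=> hc hg hr hM; have [m [blk [a [b [t [ht [ha he]]]]]]] := M_Mterm hr hM.
rewrite /Ptc !he => hyp0.
have hyp : forall x : 'I_n -> bool, (exists i, x i = false) ->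
   g (t (pickX blk a b (Jx x false))) (t (pickX blk a b (Jx x true))).
  by move=> x hx; rewrite -!he; exact: hyp0.
clear hyp0.
case: (classic (forall i : 'I_n.+1, exists j, blk j = i /\ a j <> b j)) => hne.
- have := hc m blk a b t (clo_incl ht) ha hne; move=> H; apply: H; exact: hyp.
- have [i hi] := not_all_ex_not _ _ hne.
  have hab : forall j, blk j = i -> a j = b j.
    move=> j hj; apply: NNPP => hn; apply: hi; by exists j.
  case: (unliftP ord_max i) => [i'|] hi'.
  + pose x := fun k : 'I_n => k != i'.
    have hx : forall e, pickX blk a b (Jx x e) = pickX blk a b (Jx (fun _ => true) e).
      move=> e; apply: functional_extensionality => j; rewrite /pickX /Jx.
      case: (unliftP ord_max (blk j)) => [k|] hk.
      * rewrite /x; case E: (k == i').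
        -- rewrite (eqP E) in hk; rewrite -hi' in hk; rewrite (hab j hk).
           by [].
        -- by [].
      * by [].
    rewrite -!hx; apply: hyp; exists i'; by rewrite /x eqxx.
  + have -> : pickX blk a b (Jx (fun _ => true) false) = pickX blk a b (Jx (fun _ => true) true).
      apply: functional_extensionality => j; rewrite /pickX /Jx.
      case: (unliftP ord_max (blk j)) => [k|] hk //.
      by rewrite (hab j (etrans hk (esym hi'))).
    exact: hg.
Qed.

End Term.


Definition topc N : 'I_N -> bool := fun _ => true.
Arguments topc {N}.
Definition eqX N (X Y : 'I_N -> bool) : bool := [forall k, X k == Y k].
Definition upd (A : Type) N (W : cube A N) (p : 'I_N -> bool) (v : A) : cube A N :=
  fun X => if eqX X p then v else W X.

Lemma eqXP N (X Y : 'I_N -> bool) : eqX X Y -> X = Y.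
Proof. move/forallP => h; apply: functional_extensionality => k; exact/eqP/h. Qed.
Lemma eqXX N (X : 'I_N -> bool) : eqX X X.
Proof. by apply/forallP. Qed.

Lemma Jtop n : Jx (fun _ : 'I_n => true) true = topc.
Proof. apply: functional_extensionality => k; rewrite /Jx; by case: (unlift _ _). Qed.

Lemma val_lift_max n (k : 'I_n) : (val (lift ord_max k) == n) = false.
Proof.
have h := neq_lift (@ord_max n) k.
apply/negbTE; move: h; apply: contra => /eqP h; rewrite eq_sym; apply/eqP; exact: val_inj.
Qed.

Lemma setn_J n (x : 'I_n -> bool) e b : setn (Jx x e) n b = Jx x b.
Proof.
apply: functional_extensionality => k; rewrite /setn /Jx.
case: (unliftP ord_max k) => [k'|] ->.
- by rewrite val_lift_max.
- by rewrite /= eqxx.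
Qed.

Lemma J_eta n (X : 'I_n.+1 -> bool) : Jx (fun i => X (lift ord_max i)) (X ord_max) = X.
Proof.
apply: functional_extensionality => k; rewrite /Jx.
by case: (unliftP ord_max k) => [k'|] ->.
Qed.

Lemma J_nottop n (x : 'I_n -> bool) e i : x i = false -> eqX (Jx x e) topc = false.
Proof.
move=> hi; apply/negbTE/negP => /forallP /(_ (lift ord_max i)).
by rewrite /Jx liftK hi.
Qed.

Lemma J1_nottop n : eqX (Jx (fun _ : 'I_n => true) false) topc = false.
Proof.
apply/negbTE/negP => /forallP /(_ ord_max).
by rewrite /Jx unlift_none.
Qed.

Lemma flipto_top N (p X : 'I_N -> bool) : eqX (flipto p X) topc = eqX X p.
Proof. rewrite /eqX /flipto /topc; apply: eq_forallb => k; by rewrite eqb_id. Qed.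

Section Rho.
Variable A : Type.
Variable D : opset A.
Hypothesis hD : is_clone D.
Variable q : op A 3.
Hypothesis hqD : @D 3 q.
Hypothesis hmal : is_malcev q.

Lemma qxxy x y : q (tri x x y) = y. Proof. exact: (proj1 (hmal x y)). Qed.
Lemma qyxx x y : q (tri y x x) = y. Proof. exact: (proj2 (hmal x y)). Qed.

Variable n : nat.
Variable al : 'I_n.+1 -> rel A.
Hypothesis hr : forall i x, al i x x.
Hypothesis hs : forall i x y, al i x y -> al i y x.

Lemma lemA g c V :
  centralizes D al g -> (forall x, g x x) ->
  Mc D al c -> Mc D al V -> (forall X, eqX X topc = false -> V X = c X) ->
  g (V topc) (c topc).
Proof.
move=> hc hg hMc hMV hag.
pose w := fun X => q (tri (c X) (V X) (V (setn X n true))).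
have hw : Mc D al w.
  apply: Mq => //; exact: Mset.
have := TCM hD hc hg hr hw; rewrite /Ptc /w !setn_J Jtop.
have e1 : V (Jx (fun _ => true) false) = c (Jx (fun _ => true) false) by apply: hag; exact: J1_nottop.
rewrite e1 qxxy.
rewrite qyxx => H; apply: H => x [i hi].
have e2 : forall e, V (Jx x e) = c (Jx x e) by move=> e; apply: hag; exact: (J_nottop _ hi).
rewrite !setn_J !e2 qxxy qyxx; exact: hg.
Qed.

Definition rho (u v : A) :=
  exists W, Mc D al W /\ W topc = u /\ Mc D al (upd W topc v).

Lemma rho_refl u : rho u u.
Proof.
exists (fun _ => u); split; first exact: Mconst. split => //.
apply: (Mext (Mconst _ _ u)) => X; rewrite /upd; by case: ifP.
Qed.

Lemma shift V p v : Mc D al V -> rho (V p) v -> Mc D al (upd V p v).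
Proof.
move=> hV [W [hW [hWt hW']]].
have h1 := Mflip p hs hW. have h2 := Mflip p hs hW'.
apply: (Mext (Mq hqD hV h1 h2)) => X /=.
rewrite /upd flipto_top.
case E: (eqX X p).
- have ex := eqXP E; subst X.
  have -> : flipto p p = topc by apply: functional_extensionality => k; rewrite /flipto eqxx.
  by rewrite hWt qxxy.
- by rewrite qyxx.
Qed.

Lemma rho_sym u v : rho u v -> rho v u.
Proof.
move=> [W [hW [hWt hW']]]; exists (upd W topc v); split => //.
split; first by rewrite /upd eqXX.
apply: (Mext hW) => X; rewrite /upd; case E: (eqX X topc) => //.
by rewrite (eqXP E).
Qed.

Lemma rho_trans u v w : rho u v -> rho v w -> rho u w.
Proof.
move=> [W [hW [hWt hW']]] h2; exists W; split => //; split => //.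
have h2' : rho (upd W topc v topc) w by rewrite /upd eqXX.
have H := shift hW' h2'.
apply: (Mext H) => X; rewrite /upd; by case: (eqX X topc).
Qed.

Lemma rho_compat k (f : op A k) x y :
  @D k f -> (forall i, rho (x i) (y i)) -> rho (f x) (f y).
Proof.
move=> hf h.
pose W := fun i => proj1_sig (constructive_indefinite_description _ (h i)).
have hWi : forall i, Mc D al (W i) /\ W i topc = x i /\ Mc D al (upd (W i) topc (y i)).
  move=> i; exact: (proj2_sig (constructive_indefinite_description _ (h i))).
exists (fun X => f (fun i => W i X)); split; first by apply: Mop => // i; case: (hWi i).
split.
- congr f; apply: functional_extensionality => i; by case: (hWi i) => _ [].
- apply: (Mext (Mop (V := fun i => upd (W i) topc (y i)) hf _)).
  + by move=> i; case: (hWi i) => _ [].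
  + move=> X; rewrite /upd; case: ifP => // _.
Qed.


Lemma rho_cent : centralizes D al rho.
Proof.
move=> m blk a b t ht ha _ hyp0.
have htD := clone_clo hD ht.
pose c := fun X => t (pickX blk a b X).
have hc : Mc D al c.
  have H : Mc D al (fun X => t (fun j => (fun j X => if X (blk j) then b j else a j) j X)).
    apply: Mop => // j; exact: Melem.
  exact: H.
have hyp : forall x : 'I_n -> bool, (exists i, x i = false) -> rho (c (Jx x false)) (c (Jx x true)).
  move=> x hx; exact: hyp0.
change (rho (c (Jx (fun _ => true) false)) (c (Jx (fun _ => true) true))).
pose c0 := fun X => c (setn X n false).
have hc0 : Mc D al c0 by exact: Mset.
pose Lf := fun (L : seq {ffun 'I_n -> bool}) X =>
  if has (fun f : {ffun 'I_n -> bool} => ~~ [forall i, f i] && eqX X (Jx f true)) L then c X else c0 X.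
have hL : forall L, Mc D al (Lf L).
  elim => [|f L IH].
  - by apply: (Mext hc0) => X.
  - case E: [forall i, f i].
    + by apply: (Mext IH) => X; rewrite /Lf /= E.
    + have hr0 : rho (Lf L (Jx f true)) (c (Jx f true)).
        rewrite /Lf; case: ifP => _; first exact: rho_refl.
        rewrite /c0 setn_J; apply: hyp.
        move/negbT: E; rewrite negb_forall => /existsP [i hi]; exists i; exact: negbTE hi.
      have hsh := shift IH hr0.
      apply: (Mext hsh) => X; rewrite /upd /Lf /= E /=.
      case E2: (eqX X (Jx f true)) => //=.
      by rewrite (eqXP E2).

have hLe := hL (enum {ffun 'I_n -> bool}).
exists (Lf (enum {ffun 'I_n -> bool})); split => //; split.
- rewrite /Lf.
  have -> : has (fun f : {ffun 'I_n -> bool} => ~~ [forall i, f i] && eqX topc (Jx f true))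
             (enum {ffun 'I_n -> bool}) = false.
    apply/negbTE/hasPn => f _; apply/negP => /andP [hnf he].
    move/negP: hnf; apply; apply/forallP => i.
    have := congr1 (fun X => X (lift ord_max i)) (eqXP he).
    by rewrite /Jx liftK /topc => <-.
  by rewrite /c0 -Jtop setn_J.
- rewrite Jtop; apply: (Mext hc) => X; rewrite /upd.
  case E: (eqX X topc); first by rewrite (eqXP E).
  rewrite /Lf.
  have eX := J_eta X.
  case He: (X ord_max).
  + have -> : has (fun f : {ffun 'I_n -> bool} => ~~ [forall i, f i] && eqX X (Jx f true))
               (enum {ffun 'I_n -> bool}) = true.
      apply/hasP; exists [ffun i => X (lift ord_max i)]; first by rewrite mem_enum.
      apply/andP; split.
      * apply/negP => /forallP hall; move/negbT: E => /negP; apply.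
        apply/forallP => k; rewrite /topc; apply/eqP.
        case: (unliftP ord_max k) => [k'|] ->; last by [].
        by have := hall k'; rewrite ffunE.
      * apply/forallP => k; apply/eqP; rewrite /Jx.
        case: (unliftP ord_max k) => [k'|] ->.
        -- by rewrite ffunE.
        -- by [].
    by [].
  + case: ifP => // _.
    rewrite /c0; congr c; rewrite -eX He setn_J //.
Qed.

Lemma rho_comm : (forall i, Con D (al i)) -> is_commutator D al rho.
Proof.
move=> hal; split.
- split; first exact: rho_refl. split; first exact: rho_sym. split; first exact: rho_trans.
  move=> k f hf x y; exact: rho_compat.
- split; first exact: rho_cent.
  move=> d [dr [ds [dt dc]]] hcd u v [W [hW [hWt hW']]].
  have := lemA hcd dr hW' hW.
  rewrite hWt /upd eqXX => H; apply: H => X E; by rewrite E.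
Qed.

End Rho.



Fixpoint compl (A : Type) N (q : op A 3) (c : cube A N) (k : nat) : cube A N :=
  match k with
  | 0 => fun _ => c topc
  | k'.+1 => fun X => q (tri (compl q c k' X) (compl q c k' (setn X k' false)) (c (setn X k' false)))
  end.

Lemma compl_ok (A : Type) (D : opset A) (q : op A 3) N (al : 'I_N -> rel A) (c : cube A N) :
  @D 3 q -> is_malcev q ->
  (forall i : 'I_N, Mc D al (fun X => c (setn X i false))) ->
  forall k, k <= N -> Mc D al (compl q c k) /\
    forall X (i : 'I_N), i < k -> X i = false -> compl q c k X = c X.
Proof.
move=> hq hm hf; elim => [|k IH] hk.
- split; first exact: Mconst. by [].
- have hk' : k < N by [].
  have [IH1 IH2] := IH (ltnW hk').
  split.
  + apply: Mq => //; first exact: Mset.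
    exact: (hf (Ordinal hk')).
  + move=> X i hi hXi /=.
    case hX: (X (Ordinal hk')).
    * have ne : val i != k.
        apply/negP => /eqP e; have : i = Ordinal hk' by apply: val_inj.
        by move=> ei; rewrite ei hX in hXi.
      have hik : i < k by rewrite ltnS leq_eqVlt (negbTE ne) in hi.
      rewrite (IH2 X i hik hXi).
      have -> : compl q c k (setn X k false) = c (setn X k false).
        apply: IH2 hik _; by rewrite /setn (negbTE ne).
      exact: (proj2 (hm _ _)).
    * have eS : setn X k false = X.
        apply: functional_extensionality => j; rewrite /setn.
        case: eqP => // ej; have : j = Ordinal hk' by apply: val_inj.
        by move=> ->.
      rewrite eS; exact: (proj1 (hm _ _)).
Qed.

Section Main.
Variable A : Type.
Variables D1 D2 : opset A.
Hypotheses (h1 : is_clone D1) (h2 : is_clone D2).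
Variable q : op A 3.
Hypotheses (hq1 : @D1 3 q) (hq2 : @D2 3 q) (hm : is_malcev q).
Hypothesis hcon : forall th, Con D1 th -> Con D2 th.
Hypothesis hcom : forall n (al : 'I_n.+1 -> rel A), (forall i, Con D1 (al i)) ->
  forall g, is_commutator D1 al g -> is_commutator D2 al g.

Lemma mainM N (al : 'I_N -> rel A) : (forall i, Con D1 (al i)) ->
  forall c, Mc D1 al c -> Mc D2 al c.
Proof.
elim: N al => [|N IH] al hal c hc.
- apply: (Mext (Mconst _ _ (c topc))) => X.
  congr c; apply: functional_extensionality => k; case: (I0F k).
- have hal2 : forall i, Con D2 (al i) by move=> i; apply: hcon.
  have hf2 : forall i : 'I_N.+1, Mc D2 al (fun X => c (setn X i false)).
    move=> i.
    have hF := Mface i false hc.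
    have hF2 := IH _ (fun k => hal (lift i k)) _ hF.
    apply: (Mext (Mlift hF2)) => X; by rewrite insX_setn.
  have hf1 : forall i : 'I_N.+1, Mc D1 al (fun X => c (setn X i false)).
    move=> i; exact: Mset.
  have [hV1 hVa] := compl_ok hq1 hm hf1 (leqnn N.+1).
  have [hV2 _] := compl_ok hq2 hm hf2 (leqnn N.+1).
  set V := compl q c N.+1 in hV1 hVa hV2.
  have agree : forall X, eqX X topc = false -> V X = c X.
    move=> X /negbT; rewrite negb_forall => /existsP [i hi].
    apply: (hVa X i); first exact: ltn_ord.
    move: hi; case: (X i) => // .
  have hr1 : forall i x, al i x x by move=> i0 x; case: (hal i0).
  have hs1 : forall i x y, al i x y -> al i y x by move=> i0 x y; case: (hal i0) => _ [hsy _]; exact: hsy.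
  have hrho1 : rho D1 al (V topc) (c topc).
    exists V; split => //; split => //.
    apply: (Mext hc) => X; rewrite /upd; case E: (eqX X topc); first by rewrite (eqXP E).
    by rewrite agree.
  have hC1 := rho_comm h1 hq1 hm hr1 hs1 hal.
  have hC2 := rho_comm h2 hq2 hm hr1 hs1 hal2.
  have [_ [_ hmin]] := hcom hal hC1.
  have [hc2 [hcent2 _]] := hC2.
  have hrho2 := hmin _ hc2 hcent2 _ _ hrho1.
  have := shift hq2 hm hs1 hV2 hrho2.
  move=> H; apply: (Mext H) => X; rewrite /upd; case E: (eqX X topc); first by rewrite (eqXP E).
  by rewrite agree.
Qed.

End Main.


Definition Cl (A : Type) (F : opset A) : opset A := fun n f =>
  (forall th, Con F th -> preserves f th) /\
  (forall N (al : 'I_N -> rel A), (forall i, Con F (al i)) ->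
     forall V : 'I_n -> cube A N, (forall j, Mc (Clo F) al (V j)) ->
       Mc (Clo F) al (fun X => f (fun j => V j X))).

Section Final.
Variable A : Type.
Variable F : opset A.

Lemma Cl_clone : is_clone (Cl F).
Proof.
split.
- move=> n i; split.
  + move=> th _ x y h; exact: h.
  + move=> N al _ V hV; exact: hV.
- move=> n m f g [hf1 hf2] hg; split.
  + move=> th hth x y hxy; apply: hf1 => // i; apply: (proj1 (hg i)) => //.
  + move=> N al hal V hV.
    exact: (hf2 N al hal (fun i X => g i (fun j => V j X)) (fun i => proj2 (hg i) N al hal V hV)).
Qed.

Lemma Clo_Cl n (f : op A n) : Clo F f -> Cl F f.
Proof.
move=> hf; split.
- move=> th hth; exact: clo_pres hth hf.
- move=> N al hal V hV; exact: Mop.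
Qed.

Lemma cent_Cl n (al : 'I_n.+1 -> rel A) g : (forall i, Con F (al i)) -> Con F g ->
  centralizes F al g <-> centralizes (Cl F) al g.
Proof.
move=> hal hg; split.
- move=> hc m blk a b t ht ha hne hyp.
  have htC := clone_clo Cl_clone ht.
  pose c := fun X => t (pickX blk a b X).
  have hM : Mc (Clo F) al c.
    have H := proj2 htC n.+1 al hal (fun j X => if X (blk j) then b j else a j).
    apply: H => j; exact: Melem.
  have hc' : centralizes (Clo F) al g := proj1 (cent_clo F al g) hc.
  have hr : forall i x, al i x x by move=> i x; case: (hal i).
  have hgr : forall x, g x x by case: hg.
  have := TCM (clo_clone F) hc' hgr hr hM; rewrite /Ptc => H; apply: H.
  move=> x hx; exact: hyp.
- move=> hc m blk a b t ht; apply: (hc m blk a b t).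
  apply: clo_incl; apply: Clo_Cl; exact: ht.
Qed.

Lemma con_Cl th : Con F th <-> Con (Cl F) th.
Proof.
split.
- move=> h; have [r [s [t _]]] := h; do 3 (split => //).
  move=> n f [hf _]; exact: hf.
- move=> [r [s [t hc]]]; do 3 (split => //).
  move=> n f hf; apply: hc; apply: Clo_Cl; exact: clo_incl.
Qed.

End Final.

Theorem mainTheorem3 (A : Type) (F : opset A) (q : op A 3)
  (hq : Clo F q) (hmal : is_malcev q) :
  exists C : opset A,
    [/\ is_clone C, C 3 q, preserves_cons_comms F C &
        forall D : opset A, is_clone D -> D 3 q -> preserves_cons_comms F D ->
          subops D C].
Proof.
exists (Cl F); split.
- exact: Cl_clone.
- exact: Clo_Cl.
- split.
  + move=> th; exact: con_Cl.
  + move=> n al hal g; split.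
    * move=> [hg1 [hg2 hg3]]; split; first exact: (proj1 (con_Cl F g) hg1).
      split; first exact: (proj1 (cent_Cl hal hg1) hg2).
      move=> d hd hcd; have hd' := proj2 (con_Cl F d) hd.
      apply: hg3 => //; exact: (proj2 (cent_Cl hal hd') hcd).
    * move=> [hg1 [hg2 hg3]]; have hg1' := proj2 (con_Cl F g) hg1.
      split => //; split; first exact: (proj2 (cent_Cl hal hg1') hg2).
      move=> d hd hcd; apply: hg3; first exact: (proj1 (con_Cl F d) hd).
      exact: (proj1 (cent_Cl hal hd) hcd).
- move=> D hD hqD [pc1 pc2] n f hf; split.
  + move=> th hth x y hxy; have [_ [_ [_ hc]]] := proj1 (pc1 th) hth; exact: hc _ _ hf x y hxy.
  + move=> N al hal V hV.
    have hcA : forall th, Con (Clo F) th -> Con D th.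
      move=> th h; apply/(pc1 th); exact: (proj2 (con_clo F th) h).
    have hcB : forall th, Con D th -> Con (Clo F) th.
      move=> th h; apply: (proj1 (con_clo F th)); exact: (proj2 (pc1 th) h).
    have hmA : forall n (al : 'I_n.+1 -> rel A), (forall i, Con (Clo F) (al i)) ->
        forall g, is_commutator (Clo F) al g -> is_commutator D al g.
      move=> k be hbe g hg.
      have hbe' : forall i, Con F (be i) by move=> i; exact: (proj2 (con_clo F _) (hbe i)).
      apply: (proj1 (pc2 k be hbe' g)); exact: (proj2 (comm_clo F be g) hg).
    have hmB : forall n (al : 'I_n.+1 -> rel A), (forall i, Con D (al i)) ->
        forall g, is_commutator D al g -> is_commutator (Clo F) al g.
      move=> k be hbe g hg.
      have hbe' : forall i, Con F (be i) by move=> i; exact: (proj2 (pc1 _) (hbe i)).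
      apply: (proj1 (comm_clo F be g)); exact: (proj2 (pc2 k be hbe' g) hg).
    have halC : forall i, Con (Clo F) (al i) by move=> i; exact: (proj1 (con_clo F _) (hal i)).
    have halD : forall i, Con D (al i) by move=> i; exact: hcA.
    have hVD : forall j, Mc D al (V j).
      move=> j; exact: (mainM (clo_clone F) hD hq hqD hmal hcA hmA halC (hV j)).
    have hfV : Mc D al (fun X => f (fun j => V j X)) by exact: Mop.
    exact: (mainM hD (clo_clone F) hqD hq hmal hcB hmB halD hfV).
Qed.
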